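(* Let $P\subseteq\omega$ and let $p_0\ge p_1\ge p_2\ge\cdots$ be a sequence of $\mathbb C$-conditions with $\lim_s|p_s|=\infty$ which is 3-generic relative to $P$, and let $f=\bigcup_s\sigma^{p_s}:[\omega]^2\to 2$. Then $f$ is a stable 2-coloring of pairs and $f\oplus P$ does not compute any infinite set homogeneous for $f$.
   Context: $\mathbb C$ is the following notion of forcing. A condition is a triple $p=\langle\sigma^p,l^p,|p|\rangle$ where $|p|\in\omega$, $\sigma^p:[|p|]^2\to 2$ (a coloring of pairs of numbers below $|p|$), $l^p:|p|\to 2\times\omega$, and whenever $l^p(x)=\langle i,z\rangle$, $\sigma^p(x,y)$ is defined and $y\ge z$, then $\sigma^p(x,y)=i$. A condition $q$ extends $p$ ($q\le p$) if $|q|\ge|p|$, $\sigma^q\supseteq\sigma^p$ and $l^q\supseteq l^p$. A descending sequence $(p_s)$ is 3-generic relative to $P$ if for every set $W$ of conditions that is $\Sigma^0_3$-definable in $P$, either some $p_s$ lies in $W$ or some $p_s$ has no extension in $W$. Here $f(x,y)$ means $f(\{x,y\})$ for $x<y$; a coloring is stable if $\lim_u f(x,u)$ exists for all $x$; an infinite set $H$ is homogeneous for $f$ if $f$ is constant on $[H]^2$; $A\oplus B=\{2x:x\in A\}\cup\{2y+1:y\in B\}$. *)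

(* Defs.v *)
(* Computability relative to an oracle is modelled by
   Kleene's mu-recursive functions with an oracle (relational semantics). *)
From Stdlib Require Import Arith List.
Import ListNotations.

Definition pair (x y : nat) : nat := (x + y) * S (x + y) / 2 + y.
Fixpoint encode_list (l : list nat) : nat :=
  match l with [] => 0 | x :: r => S (pair x (encode_list r)) end.

Inductive code : Type :=
| Zero | Succ | Proj (i : nat) | Orac
| Comp (f : code) (gs : list code)
| Prec (f g : code)
| Mu (f : code).

Inductive eval (A : nat -> Prop) : code -> list nat -> nat -> Prop :=
| eZero xs : eval A Zero xs 0
| eSucc xs : eval A Succ xs (S (hd 0 xs))
| eProj i xs : eval A (Proj i) xs (nth i xs 0)
| eOracT xs : A (hd 0 xs) -> eval A Orac xs 1
| eOracF xs : ~ A (hd 0 xs) -> eval A Orac xs 0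
| eComp f gs xs ys y :
    evals A gs xs ys -> eval A f ys y -> eval A (Comp f gs) xs y
| ePrec0 f g xs y : eval A f xs y -> eval A (Prec f g) (0 :: xs) y
| ePrecS f g n xs r y :
    eval A (Prec f g) (n :: xs) r -> eval A g (n :: r :: xs) y ->
    eval A (Prec f g) (S n :: xs) y
| eMu f xs n :
    eval A f (n :: xs) 0 ->
    (forall m, m < n -> exists k, eval A f (m :: xs) (S k)) ->
    eval A (Mu f) xs n
with evals (A : nat -> Prop) : list code -> list nat -> list nat -> Prop :=
| esNil xs : evals A [] xs []
| esCons g gs xs y ys :
    eval A g xs y -> evals A gs xs ys -> evals A (g :: gs) xs (y :: ys).

Definition computable_from (A H : nat -> Prop) : Prop :=
  exists e : code, forall x,
    (H x -> eval A e [x] 1) /\ (~ H x -> eval A e [x] 0).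

Definition Sigma03 (P S : nat -> Prop) : Prop :=
  exists R : nat -> Prop, computable_from P R /\
    forall n, S n <-> exists a, forall b, exists c, R (encode_list [n; a; b; c]).

(* A condition: length |p|, sigma^p (meaningful on x < y < |p|),
   l^p (meaningful on x < |p|); colors 2 = bool. *)
Record cond : Type := mkCond {
  len : nat;
  sig : nat -> nat -> bool;
  lab : nat -> bool * nat }.

Definition valid (p : cond) : Prop :=
  forall x y, x < y -> y < len p -> snd (lab p x) <= y ->
    sig p x y = fst (lab p x).

Definition extends (q p : cond) : Prop :=
  len p <= len q /\
  (forall x y, x < y -> y < len p -> sig q x y = sig p x y) /\
  (forall x, x < len p -> lab q x = lab p x).

Definition b2n (b : bool) : nat := if b then 1 else 0.

(* Canonical natural-number code of a condition (depends only on its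
   meaningful finite data). *)
Definition code_cond (p : cond) : nat :=
  encode_list
    [len p;
     encode_list (flat_map (fun y => map (fun x => b2n (sig p x y)) (seq 0 y))
                           (seq 0 (len p)));
     encode_list (map (fun x => pair (b2n (fst (lab p x))) (snd (lab p x)))
                      (seq 0 (len p)))].

(* A descending sequence of conditions that is 3-generic relative to P:
   W ranges over sets of conditions Sigma^0_3-definable in P, i.e.
   W = {q | S (code_cond q)} with S Sigma^0_3 in P. *)
Definition three_generic (P : nat -> Prop) (ps : nat -> cond) : Prop :=
  forall S : nat -> Prop, Sigma03 P S ->
    (exists s, S (code_cond (ps s))) \/
    (exists s, ~ exists q, valid q /\ extends q (ps s) /\ S (code_cond q)).

Definition stable (f : nat -> nat -> bool) : Prop :=
  forall x, exists c N, forall u, N <= u -> x < u -> f x u = c.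

Definition infinite (H : nat -> Prop) : Prop :=
  forall n, exists m, n <= m /\ H m.

Definition homogeneous (f : nat -> nat -> bool) (H : nat -> Prop) : Prop :=
  infinite H /\ exists c, forall x y, H x -> H y -> x < y -> f x y = c.

(* The coloring f of pairs as a subset of omega: codes of pairs x<y colored 1. *)
Definition coloring_set (f : nat -> nat -> bool) (n : nat) : Prop :=
  exists x y, x < y /\ n = pair x y /\ f x y = true.

Definition join (A B : nat -> Prop) (n : nat) : Prop :=
  (Nat.even n = true /\ A (Nat.div2 n)) \/ (Nat.even n = false /\ B (Nat.div2 n)).

(* Main.v *)
Require Import Defs.
From Stdlib Require Import Arith List.

From Stdlib Require Import Arith List Lia.
Import ListNotations.

Lemma eval_conv A e xs v w : eval A e xs v -> v = w -> eval A e xs w.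
Proof. intros H ->; exact H. Qed.

Definition eval_ind3 (A : nat -> Prop) (Pe : code -> list nat -> nat -> Prop) (Ps : list code -> list nat -> list nat -> Prop) (hZero : forall xs, Pe Zero xs 0) (hSucc : forall xs, Pe Succ xs (S (hd 0 xs))) (hProj : forall i xs, Pe (Proj i) xs (nth i xs 0)) (hOT : forall xs, A (hd 0 xs) -> Pe Orac xs 1) (hOF : forall xs, ~ A (hd 0 xs) -> Pe Orac xs 0) (hComp : forall f gs xs ys y, evals A gs xs ys -> Ps gs xs ys ->
  eval A f ys y -> Pe f ys y -> Pe (Comp f gs) xs y) (hPrec0 : forall f g xs y, eval A f xs y -> Pe f xs y -> Pe (Prec f g) (0 :: xs) y) (hPrecS : forall f g n xs r y, eval A (Prec f g) (n :: xs) r -> Pe (Prec f g) (n :: xs) r ->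
  eval A g (n :: r :: xs) y -> Pe g (n :: r :: xs) y -> Pe (Prec f g) (S n :: xs) y) (hMu : forall f xs n, eval A f (n :: xs) 0 -> Pe f (n :: xs) 0 ->
  (forall m, m < n -> exists k, eval A f (m :: xs) (S k) /\ Pe f (m :: xs) (S k)) ->
  Pe (Mu f) xs n) (hNil : forall xs, Ps [] xs []) (hCons : forall g gs xs y ys, eval A g xs y -> Pe g xs y -> evals A gs xs ys -> Ps gs xs ys ->
  Ps (g :: gs) xs (y :: ys)) :
  forall e xs v, eval A e xs v -> Pe e xs v :=
 fix eval_ind3 e xs v (d : eval A e xs v) {struct d} : Pe e xs v :=
  match d in eval _ e xs v return Pe e xs v with
  | eZero _ xs => hZero xs
  | eSucc _ xs => hSucc xs
  | eProj _ i xs => hProj i xs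
  | eOracT _ xs h => hOT xs h
  | eOracF _ xs h => hOF xs h
  | eComp _ f gs xs ys y d1 d2 => hComp f gs xs ys y d1 (evals_ind3 gs xs ys d1) d2 (eval_ind3 f ys y d2)
  | ePrec0 _ f g xs y d1 => hPrec0 f g xs y d1 (eval_ind3 f xs y d1)
  | ePrecS _ f g n xs r y d1 d2 => hPrecS f g n xs r y d1 (eval_ind3 _ _ _ d1) d2 (eval_ind3 _ _ _ d2)
  | eMu _ f xs n d1 h => hMu f xs n d1 (eval_ind3 _ _ _ d1)
      (fun m hm => match h m hm with ex_intro _ k dk => ex_intro _ k (conj dk (eval_ind3 _ _ _ dk)) end)
  end
with evals_ind3 gs xs ys (d : evals A gs xs ys) {struct d} : Ps gs xs ys :=
  match d in evals _ gs xs ys return Ps gs xs ys with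
  | esNil _ xs => hNil xs
  | esCons _ g gs xs y ys d1 d2 => hCons g gs xs y ys d1 (eval_ind3 _ _ _ d1) d2 (evals_ind3 _ _ _ d2)
  end
  for eval_ind3.

Lemma eval_det A :
  (forall e xs v, eval A e xs v -> forall w, eval A e xs w -> v = w).
Proof.
  apply (eval_ind3 A (fun e xs v => forall w, eval A e xs w -> v = w)
                     (fun gs xs ys => forall zs, evals A gs xs zs -> ys = zs)).
  all: intros.
  all: match goal with H : eval _ _ _ _ |- _ => inversion H; subst | H : evals _ _ _ _ |- _ => inversion H; subst end.
  all: try reflexivity; try contradiction.
  all: try (repeat match goal with IH : forall w, eval _ ?e ?xs w -> _ = w, H : eval _ ?e ?xs _ |- _ => apply IH in H; subst end; auto; fail).
  all: try (repeat match goal with IH : forall zs, evals _ ?e ?xs zs -> _ = zs, H : evals _ ?e ?xs _ |- _ => apply IH in H; subst end; auto; fail).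
  all: try (match goal with Hs : evals _ (_ :: _) _ _ |- _ => inversion Hs; subst; f_equal; eauto end; fail).
  - destruct (lt_eq_lt_dec n w) as [[Hl|Hl]|Hl]; auto.
    + destruct (H5 _ Hl) as [k Hk]. apply H0 in Hk. discriminate.
    + destruct (H1 _ Hl) as [k [Hk1 Hk2]]. apply Hk2 in H4. discriminate.
Qed.

Fixpoint Cn c := match c with 0 => Zero | S c => Comp Succ [Cn c] end.

Lemma ev_C A c xs : eval A (Cn c) xs c.
Proof.
  induction c; simpl. constructor.
  econstructor. repeat econstructor; eauto. constructor.
Qed.

Lemma ev_P A i xs : eval A (Proj i) xs (nth i xs 0).
Proof. constructor. Qed.

Lemma ev_comp1 A f g xs a v : eval A g xs a -> eval A f [a] v -> eval A (Comp f [g]) xs v.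
Proof. intros. econstructor; eauto. repeat econstructor; eauto. Qed.
Lemma ev_comp2 A f g h xs a b v : eval A g xs a -> eval A h xs b -> eval A f [a;b] v ->
  eval A (Comp f [g;h]) xs v.
Proof. intros. econstructor; eauto. repeat econstructor; eauto. Qed.
Lemma ev_comp3 A f g h k xs a b c v : eval A g xs a -> eval A h xs b -> eval A k xs c ->
  eval A f [a;b;c] v -> eval A (Comp f [g;h;k]) xs v.
Proof. intros. econstructor; eauto. repeat econstructor; eauto. Qed.

Lemma ev_prec A f g xs (h : nat -> nat) :
  eval A f xs (h 0) -> (forall i, eval A g (i :: h i :: xs) (h (S i))) ->
  forall m, eval A (Prec f g) (m :: xs) (h m).
Proof. intros Hf Hg m; induction m. constructor; auto. econstructor; eauto. Qed.

Definition SUCC g := Comp Succ [g].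
Lemma ev_SUCC A g xs a : eval A g xs a -> eval A (SUCC g) xs (S a).
Proof. intros; eapply ev_comp1; eauto. constructor. Qed.

Definition predP := Prec Zero (Proj 0).
Lemma ev_predP A x xs : eval A predP (x :: xs) (pred x).
Proof. apply (ev_prec A _ _ _ pred). constructor. intro; constructor. Qed.
Definition PRED g := Comp predP [g].
Lemma ev_PRED A g xs a : eval A g xs a -> eval A (PRED g) xs (pred a).
Proof. intros; eapply ev_comp1; eauto. apply ev_predP. Qed.

Definition addP := Prec (Proj 0) (SUCC (Proj 1)).
Lemma ev_addP A x y xs : eval A addP (x :: y :: xs) (x + y).
Proof. apply (ev_prec A _ _ _ (fun i => i + y)). constructor.
  intro; apply ev_SUCC; constructor. Qed.
Definition ADD g h := Comp addP [g;h].
Lemma ev_ADD A g h xs a b : eval A g xs a -> eval A h xs b -> eval A (ADD g h) xs (a + b).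
Proof. intros; eapply ev_comp2; eauto. apply ev_addP. Qed.

Definition mulP := Prec Zero (ADD (Proj 1) (Proj 2)).
Lemma ev_mulP A x y xs : eval A mulP (x :: y :: xs) (x * y).
Proof. apply (ev_prec A _ _ _ (fun i => i * y)). constructor.
  intro; eapply eval_conv. apply ev_ADD; constructor. simpl; lia. Qed.
Definition MUL g h := Comp mulP [g;h].
Lemma ev_MUL A g h xs a b : eval A g xs a -> eval A h xs b -> eval A (MUL g h) xs (a * b).
Proof. intros; eapply ev_comp2; eauto. apply ev_mulP. Qed.

Definition subP := Prec (Proj 0) (PRED (Proj 1)).
Lemma ev_subP A x y xs : eval A subP (x :: y :: xs) (y - x).
Proof. apply (ev_prec A _ _ _ (fun i => y - i)). eapply eval_conv. constructor. simpl; lia.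
  intro; eapply eval_conv. apply ev_PRED; constructor. simpl; lia. Qed.
Definition SUB g h := Comp subP [h;g].
Lemma ev_SUB A g h xs a b : eval A g xs a -> eval A h xs b -> eval A (SUB g h) xs (a - b).
Proof. intros; eapply ev_comp2; eauto. apply ev_subP. Qed.

Definition sgnP := Prec Zero (Cn 1).
Lemma ev_sgnP A x xs : eval A sgnP (x :: xs) (if x =? 0 then 0 else 1).
Proof. apply (ev_prec A _ _ _ (fun i => if i =? 0 then 0 else 1)). constructor.
  intro; apply ev_C. Qed.
Definition NZ g := Comp sgnP [g].
Lemma ev_NZ A g xs a : eval A g xs a -> eval A (NZ g) xs (b2n (negb (a =? 0))).
Proof. intros; eapply ev_comp1; eauto. eapply eval_conv. apply ev_sgnP. destruct a; reflexivity. Qed.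

Definition NOT g := SUB (Cn 1) g.
Lemma ev_NOT A g xs b : eval A g xs (b2n b) -> eval A (NOT g) xs (b2n (negb b)).
Proof. intros; eapply eval_conv. apply ev_SUB; eauto. apply ev_C. destruct b; reflexivity. Qed.

Definition LT g h := NZ (SUB h g).
Lemma ev_LT A g h xs a b : eval A g xs a -> eval A h xs b -> eval A (LT g h) xs (b2n (a <? b)).
Proof. intros; eapply eval_conv. apply ev_NZ, ev_SUB; eauto.
  destruct (Nat.ltb_spec a b); destruct (Nat.eqb_spec (b-a) 0); simpl; lia. Qed.

Definition LE g h := NOT (NZ (SUB g h)).
Lemma ev_LE A g h xs a b : eval A g xs a -> eval A h xs b -> eval A (LE g h) xs (b2n (a <=? b)).
Proof. intros; eapply eval_conv. apply ev_NOT, ev_NZ, ev_SUB; eauto.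
  destruct (Nat.leb_spec a b); destruct (Nat.eqb_spec (a-b) 0); simpl; lia. Qed.

Definition EQ g h := NOT (NZ (ADD (SUB g h) (SUB h g))).
Lemma ev_EQ A g h xs a b : eval A g xs a -> eval A h xs b -> eval A (EQ g h) xs (b2n (a =? b)).
Proof. intros; eapply eval_conv. apply ev_NOT, ev_NZ, ev_ADD; apply ev_SUB; eauto.
  destruct (Nat.eqb_spec a b); destruct (Nat.eqb_spec (a-b+(b-a)) 0); simpl; lia. Qed.

Definition AND g h := MUL g h.
Lemma ev_AND A g h xs a b : eval A g xs (b2n a) -> eval A h xs (b2n b) -> eval A (AND g h) xs (b2n (a && b)).
Proof. intros; eapply eval_conv. apply ev_MUL; eauto. destruct a, b; reflexivity. Qed.

Definition IF c g h := ADD (MUL c g) (MUL (NOT c) h).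
Lemma ev_IF A c g h xs b x y : eval A c xs (b2n b) -> eval A g xs x -> eval A h xs y ->
  eval A (IF c g h) xs (if b then x else y).
Proof. intros; eapply eval_conv. apply ev_ADD; apply ev_MUL; eauto; apply ev_NOT; eauto.
  destruct b; simpl; lia. Qed.

From Stdlib Require Import Arith List Lia.
Import ListNotations.

Lemma div2_S i : Nat.div2 (S i) = Nat.div2 i + b2n (2 * S (Nat.div2 i) <=? S i).
Proof.
  pose proof (Nat.div2_odd i) as H1. pose proof (Nat.div2_odd (S i)) as H2.
  rewrite Nat.odd_succ in H2. rewrite <- Nat.negb_odd in H2.
  generalize dependent (Nat.div2 (S i)). generalize dependent (Nat.div2 i). intros d H1 e H2.
  destruct (Nat.leb_spec (2 * S d) (S i)); destruct (Nat.odd i); simpl in *; lia.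
Qed.

Definition halfP := Prec Zero (ADD (Proj 1) (LE (MUL (Cn 2) (SUCC (Proj 1))) (SUCC (Proj 0)))).
Lemma ev_halfP A x xs : eval A halfP (x :: xs) (Nat.div2 x).
Proof. apply (ev_prec A _ _ _ Nat.div2). constructor.
  intro i. eapply eval_conv. apply ev_ADD. constructor. apply ev_LE. apply ev_MUL. apply ev_C.
  apply ev_SUCC; constructor. apply ev_SUCC; constructor. simpl nth. rewrite div2_S. reflexivity. Qed.
Definition HALF g := Comp halfP [g].
Lemma ev_HALF A g xs a : eval A g xs a -> eval A (HALF g) xs (Nat.div2 a).
Proof. intros; eapply ev_comp1; eauto. apply ev_halfP. Qed.

Definition tri s := s * S s / 2.
Lemma tri_div2 s : tri s = Nat.div2 (s * S s).
Proof. unfold tri. rewrite Nat.div2_div. reflexivity. Qed.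
Definition TRI g := HALF (MUL g (SUCC g)).
Lemma ev_TRI A g xs a : eval A g xs a -> eval A (TRI g) xs (tri a).
Proof. intros. rewrite tri_div2. apply ev_HALF, ev_MUL; auto. apply ev_SUCC; auto. Qed.

Lemma tri_S s : tri (S s) = tri s + S s.
Proof. unfold tri. replace (S s * S (S s)) with (s * S s + S s * 2) by lia.
  rewrite Nat.div_add by lia. reflexivity. Qed.
Lemma tri_mono a b : a <= b -> tri a <= tri b.
Proof. induction 1. lia. rewrite tri_S. lia. Qed.

Fixpoint sof j := match j with 0 => 0 | S i => sof i + b2n (tri (S (sof i)) <=? S i) end.
Definition sofP := Prec Zero (ADD (Proj 1) (LE (TRI (SUCC (Proj 1))) (SUCC (Proj 0)))).
Lemma ev_sofP A x xs : eval A sofP (x :: xs) (sof x).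
Proof. apply (ev_prec A _ _ _ sof). constructor.
  intro i. apply ev_ADD. constructor. apply ev_LE. apply ev_TRI, ev_SUCC; constructor. apply ev_SUCC; constructor. Qed.
Definition SOF g := Comp sofP [g].
Lemma ev_SOF A g xs a : eval A g xs a -> eval A (SOF g) xs (sof a).
Proof. intros; eapply ev_comp1; eauto. apply ev_sofP. Qed.

Lemma sof_spec j : tri (sof j) <= j < tri (S (sof j)).
Proof.
  induction j. simpl. unfold tri; simpl. lia.
  simpl. destruct (Nat.leb_spec (tri (S (sof j))) (S j)); simpl.
  - replace (sof j + 1) with (S (sof j)) by lia. rewrite (tri_S (S (sof j))). lia.
  - rewrite Nat.add_0_r. lia.
Qed.

Lemma sof_unique j s : tri s <= j < tri (S s) -> sof j = s.
Proof.
  intros H. pose proof (sof_spec j).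
  destruct (lt_eq_lt_dec (sof j) s) as [[Hl|Hl]|Hl]; auto.
  - assert (tri (S (sof j)) <= tri s) by (apply tri_mono; lia). lia.
  - assert (tri (S s) <= tri (sof j)) by (apply tri_mono; lia). lia.
Qed.

Definition usnd j := j - tri (sof j).
Definition ufst j := sof j - usnd j.
Definition USND g := SUB g (TRI (SOF g)).
Definition UFST g := SUB (SOF g) (USND g).
Lemma ev_USND A g xs a : eval A g xs a -> eval A (USND g) xs (usnd a).
Proof. intros. apply ev_SUB; auto. apply ev_TRI, ev_SOF; auto. Qed.
Lemma ev_UFST A g xs a : eval A g xs a -> eval A (UFST g) xs (ufst a).
Proof. intros. apply ev_SUB. apply ev_SOF; auto. apply ev_USND; auto. Qed.

Lemma pair_tri x y : pair x y = tri (x + y) + y.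
Proof. reflexivity. Qed.

Lemma unpair_pair x y : ufst (pair x y) = x /\ usnd (pair x y) = y.
Proof.
  rewrite pair_tri. assert (sof (tri (x + y) + y) = x + y).
  { apply sof_unique. rewrite tri_S. lia. }
  unfold ufst, usnd. rewrite H. lia.
Qed.

Lemma pair_unpair j : pair (ufst j) (usnd j) = j.
Proof.
  rewrite pair_tri. pose proof (sof_spec j). rewrite tri_S in H.
  unfold ufst, usnd. replace (sof j - (j - tri (sof j)) + (j - tri (sof j))) with (sof j) by lia.
  lia.
Qed.

Definition tl_ n := usnd (pred n).
Definition hd_ n := ufst (pred n).
Fixpoint itail i n := match i with 0 => n | S i => tl_ (itail i n) end.
Definition nthe i n := hd_ (itail i n).

Definition itailP := Prec (Proj 0) (USND (PRED (Proj 1))).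
Lemma ev_itailP A i n xs : eval A itailP (i :: n :: xs) (itail i n).
Proof. apply (ev_prec A _ _ _ (fun i => itail i n)). constructor.
  intro j. apply ev_USND, ev_PRED. constructor. Qed.
Definition NTHE g h := UFST (PRED (Comp itailP [g; h])).
Lemma ev_NTHE A g h xs a b : eval A g xs a -> eval A h xs b -> eval A (NTHE g h) xs (nthe a b).
Proof. intros. apply ev_UFST, ev_PRED. eapply ev_comp2; eauto. apply ev_itailP. Qed.

Lemma unpair0 : ufst 0 = 0 /\ usnd 0 = 0.
Proof. exact (unpair_pair 0 0). Qed.

Lemma itail_nil i : itail i 0 = 0.
Proof. induction i; simpl; auto. rewrite IHi. unfold tl_. simpl. apply unpair0. Qed.

Lemma nthe_enc i l : nthe i (encode_list l) = nth i l 0.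
Proof.
  unfold nthe. revert i; induction l; intro i.
  - rewrite itail_nil. destruct i; simpl; apply unpair0.
  - destruct i; simpl.
    + unfold hd_. simpl. apply unpair_pair.
    + assert (forall j, itail (S j) (encode_list (a :: l)) = itail j (encode_list l)).
      { induction j. simpl. unfold tl_. simpl. apply unpair_pair. simpl. simpl in IHj. rewrite IHj. reflexivity. }
      specialize (H i). simpl in H. rewrite H. apply IHl.
Qed.

From Stdlib Require Import Arith List Lia.
Import ListNotations.

Definition idx x y := tri (pred y) + x.
Definition dsig n x y := nthe (idx x y) (nthe 1 n) =? 1.
Definition dlab n x := let v := nthe x (nthe 2 n) in (negb (ufst v =? 0), usnd v).
Definition dec (n : nat) : cond := mkCond (nthe 0 n) (dsig n) (dlab n).

Lemma flat_len (F : nat -> nat -> nat) L :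
  length (flat_map (fun y => map (fun x => F x y) (seq 0 y)) (seq 0 L)) = tri (pred L).
Proof.
  induction L. reflexivity.
  rewrite seq_S, flat_map_app, length_app, IHL. simpl. rewrite app_nil_r, length_map, length_seq.
  destruct L. reflexivity. simpl. rewrite tri_S. lia.
Qed.

Lemma flat_nth (F : nat -> nat -> nat) L x y : x < y -> y < L ->
  nth (idx x y) (flat_map (fun y => map (fun x => F x y) (seq 0 y)) (seq 0 L)) 0 = F x y.
Proof.
  induction L; intros Hxy HyL. lia.
  rewrite seq_S, flat_map_app. destruct (Nat.eq_dec y L).
  - subst. rewrite app_nth2; rewrite flat_len; unfold idx. 2: lia.
    replace (tri (pred L) + x - tri (pred L)) with x by lia. simpl. rewrite app_nil_r.
    rewrite nth_indep with (d' := F 0 L) by (rewrite length_map, length_seq; lia).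
    rewrite (map_nth (fun x => F x L)), seq_nth by lia. reflexivity.
  - rewrite app_nth1. apply IHL; lia. rewrite flat_len. unfold idx.
    destruct y. lia. simpl. assert (tri (S y) <= tri (pred L)) by (apply tri_mono; lia).
    rewrite tri_S in H. lia.
Qed.

Definition same (p q : cond) : Prop :=
  len p = len q /\ (forall x y, x < y -> y < len p -> sig p x y = sig q x y) /\
  (forall x, x < len p -> lab p x = lab q x).

Lemma dec_code q : same (dec (code_cond q)) q.
Proof.
  unfold code_cond, dec, same; cbn [len sig lab].
  split; [rewrite nthe_enc; reflexivity|split].
  - intros x y Hxy Hy. unfold dsig. rewrite !nthe_enc; simpl.
    rewrite nthe_enc in Hy |- *. simpl in Hy. rewrite (flat_nth (fun x y => b2n (sig q x y))) by lia. destruct (sig q x y); reflexivity.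
  - intros x Hx. rewrite nthe_enc in Hx; simpl in Hx. unfold dlab. rewrite !nthe_enc; simpl. rewrite !nthe_enc.
    rewrite nth_indep with (d' := pair (b2n (fst (lab q 0))) (snd (lab q 0))) by (rewrite length_map, length_seq; lia).
    rewrite (map_nth (fun x => pair (b2n (fst (lab q x))) (snd (lab q x)))), seq_nth by lia. simpl.
    destruct (unpair_pair (b2n (fst (lab q x))) (snd (lab q x))) as [-> ->].
    destruct (lab q x) as [c z]; destruct c; reflexivity.
Qed.

Lemma same_sym p q : same p q -> same q p.
Proof. intros (H1&H2&H3); split; [|split]; intros; symmetry; auto.
  apply H2; lia. apply H3; lia. Qed.

Lemma same_valid p q : same p q -> valid q -> valid p.
Proof. intros (H1&H2&H3) Hv x y Hxy Hy Hz. rewrite H2, H3 by lia. rewrite H3 in Hz by lia.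
  apply Hv; auto; lia. Qed.

Lemma extends_refl p : extends p p.
Proof. split; [lia|split]; auto. Qed.

Lemma extends_trans p q r : extends p q -> extends q r -> extends p r.
Proof. intros (H1&H2&H3) (G1&G2&G3); split; [lia|split]; intros.
  rewrite H2 by lia; auto. rewrite H3 by lia; auto. Qed.

Lemma same_ext_l p p' q : same p p' -> extends p' q -> extends p q.
Proof. intros (H1&H2&H3) (G1&G2&G3); split; [lia|split]; intros.
  rewrite H2 by lia; auto. rewrite H3 by lia; auto. Qed.
Lemma same_ext_r p q q' : same q q' -> extends p q' -> extends p q.
Proof. intros (H1&H2&H3) (G1&G2&G3); split; [lia|split]; intros.
  rewrite G2, H2 by lia; auto. rewrite G3, H3 by lia; auto. Qed.

From Stdlib Require Import Arith List Lia.
From Stdlib Require Import ClassicalEpsilon.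
Import ListNotations.

Definition pdec (P : nat -> Prop) (d : nat) : bool :=
  if excluded_middle_informative (P d) then true else false.
Lemma pdec_spec P d : pdec P d = true <-> P d.
Proof. unfold pdec; destruct (excluded_middle_informative (P d)); split; auto; discriminate. Qed.

Definition po (P : nat -> Prop) (r : cond) (q : nat) : option bool :=
  if Nat.even q then
    (let j := Nat.div2 q in
     if ufst j <? usnd j then (if usnd j <? len r then Some (sig r (ufst j) (usnd j)) else None)
     else Some false)
  else Some (pdec P (Nat.div2 q)).

Inductive evalU (O : nat -> option bool) : code -> list nat -> nat -> Prop :=
| uZero xs : evalU O Zero xs 0
| uSucc xs : evalU O Succ xs (S (hd 0 xs))
| uProj i xs : evalU O (Proj i) xs (nth i xs 0)
| uOrac xs b : O (hd 0 xs) = Some b -> evalU O Orac xs (b2n b)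
| uComp f gs xs ys y :
    evalsU O gs xs ys -> evalU O f ys y -> evalU O (Comp f gs) xs y
| uPrec0 f g xs y : evalU O f xs y -> evalU O (Prec f g) (0 :: xs) y
| uPrecS f g n xs r y :
    evalU O (Prec f g) (n :: xs) r -> evalU O g (n :: r :: xs) y ->
    evalU O (Prec f g) (S n :: xs) y
| uMu f xs n :
    evalU O f (n :: xs) 0 ->
    (forall m, m < n -> exists k, evalU O f (m :: xs) (S k)) ->
    evalU O (Mu f) xs n
with evalsU (O : nat -> option bool) : list code -> list nat -> list nat -> Prop :=
| usNil xs : evalsU O [] xs []
| usCons g gs xs y ys :
    evalU O g xs y -> evalsU O gs xs ys -> evalsU O (g :: gs) xs (y :: ys).

Definition evalU_ind3 (O : nat -> option bool) (Pe : code -> list nat -> nat -> Prop)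
  (Ps : list code -> list nat -> list nat -> Prop)
  (hZero : forall xs, Pe Zero xs 0) (hSucc : forall xs, Pe Succ xs (S (hd 0 xs)))
  (hProj : forall i xs, Pe (Proj i) xs (nth i xs 0))
  (hO : forall xs b, O (hd 0 xs) = Some b -> Pe Orac xs (b2n b))
  (hComp : forall f gs xs ys y, evalsU O gs xs ys -> Ps gs xs ys ->
     evalU O f ys y -> Pe f ys y -> Pe (Comp f gs) xs y)
  (hPrec0 : forall f g xs y, evalU O f xs y -> Pe f xs y -> Pe (Prec f g) (0 :: xs) y)
  (hPrecS : forall f g n xs r y, evalU O (Prec f g) (n :: xs) r -> Pe (Prec f g) (n :: xs) r ->
     evalU O g (n :: r :: xs) y -> Pe g (n :: r :: xs) y -> Pe (Prec f g) (S n :: xs) y)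
  (hMu : forall f xs n, evalU O f (n :: xs) 0 -> Pe f (n :: xs) 0 ->
     (forall m, m < n -> exists k, evalU O f (m :: xs) (S k) /\ Pe f (m :: xs) (S k)) ->
     Pe (Mu f) xs n)
  (hNil : forall xs, Ps [] xs [])
  (hCons : forall g gs xs y ys, evalU O g xs y -> Pe g xs y -> evalsU O gs xs ys -> Ps gs xs ys ->
     Ps (g :: gs) xs (y :: ys)) :
  forall e xs v, evalU O e xs v -> Pe e xs v :=
 fix ev e xs v (d : evalU O e xs v) {struct d} : Pe e xs v :=
  match d in evalU _ e xs v return Pe e xs v with
  | uZero _ xs => hZero xs
  | uSucc _ xs => hSucc xs
  | uProj _ i xs => hProj i xs
  | uOrac _ xs b h => hO xs b h
  | uComp _ f gs xs ys y d1 d2 => hComp f gs xs ys y d1 (evs gs xs ys d1) d2 (ev f ys y d2)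
  | uPrec0 _ f g xs y d1 => hPrec0 f g xs y d1 (ev f xs y d1)
  | uPrecS _ f g n xs r y d1 d2 => hPrecS f g n xs r y d1 (ev _ _ _ d1) d2 (ev _ _ _ d2)
  | uMu _ f xs n d1 h => hMu f xs n d1 (ev _ _ _ d1)
      (fun m hm => match h m hm with ex_intro _ k dk => ex_intro _ k (conj dk (ev _ _ _ dk)) end)
  end
with evs gs xs ys (d : evalsU O gs xs ys) {struct d} : Ps gs xs ys :=
  match d in evalsU _ gs xs ys return Ps gs xs ys with
  | usNil _ xs => hNil xs
  | usCons _ g gs xs y ys d1 d2 => hCons g gs xs y ys d1 (ev _ _ _ d1) d2 (evs _ _ _ d2)
  end
  for ev.

Lemma evalU_mono_or (O O' : nat -> option bool) :
  (forall q b, O q = Some b -> O' q = Some b) ->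
  forall e xs v, evalU O e xs v -> evalU O' e xs v.
Proof.
  intro HO.
  apply (evalU_ind3 O (fun e xs v => evalU O' e xs v) (fun gs xs ys => evalsU O' gs xs ys));
  intros; try (econstructor; eauto; fail).
  constructor; auto. intros m Hm. destruct (H1 m Hm) as [k [_ Hk]]. eauto.
Qed.

Definition agree (f : nat -> nat -> bool) (r : cond) :=
  forall x y, x < y -> y < len r -> f x y = sig r x y.

Lemma po_transfer P f r q b : agree f r -> po P r q = Some b ->
  (b = true <-> join (coloring_set f) P q).
Proof.
  intros Ha. unfold po, join. destruct (Nat.even q) eqn:Ev.
  - destruct (Nat.ltb_spec (ufst (Nat.div2 q)) (usnd (Nat.div2 q))) as [Hl|Hl].
    + destruct (Nat.ltb_spec (usnd (Nat.div2 q)) (len r)); [|discriminate].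
      intro E; injection E; intros <-. split.
      * intro Hs. left. split; auto. exists (ufst (Nat.div2 q)), (usnd (Nat.div2 q)).
        rewrite pair_unpair. repeat split; auto. rewrite Ha; auto.
      * intros [[_ (x&y&Hxy&Hq&Hf)]|[? _]]; [|discriminate].
        rewrite Hq in *. destruct (unpair_pair x y) as [E1 E2]. rewrite E1, E2 in *.
        rewrite <- Ha; auto.
    + intro E; injection E; intros <-. split; [discriminate|].
      intros [[_ (x&y&Hxy&Hq&Hf)]|[? _]]; [|discriminate].
      rewrite Hq in Hl. destruct (unpair_pair x y) as [E1 E2]. rewrite E1, E2 in *. lia.
  - intro E; injection E; intros <-. rewrite pdec_spec. split.
    + intro; right; auto.
    + intros [[? _]|[_ ?]]; auto; discriminate.
Qed.

Lemma transfer P f r : agree f r ->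
  forall e xs v, evalU (po P r) e xs v -> eval (join (coloring_set f) P) e xs v.
Proof.
  intro Ha.
  apply (evalU_ind3 (po P r) (fun e xs v => eval (join (coloring_set f) P) e xs v)
                             (fun gs xs ys => evals (join (coloring_set f) P) gs xs ys));
  intros; try (econstructor; eauto; fail).
  - pose proof (po_transfer P f r _ b Ha H) as E. destruct b; simpl.
    + constructor. apply E; auto.
    + constructor. intro Hj. apply E in Hj. discriminate.
  - constructor; auto. intros m Hm. destruct (H1 m Hm) as [k [_ Hk]]. eauto.
Qed.

Lemma max_bound (n : nat) (Q : nat -> nat -> Prop) :
  (forall m N N', Q m N -> N <= N' -> Q m N') ->
  (forall m, m < n -> exists N, Q m N) -> exists N, forall m, m < n -> Q m N.
Proof.
  intros Hmono. induction n; intros H.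
  - exists 0; intros; lia.
  - destruct IHn as [N HN]. intros; apply H; lia.
    destruct (H n) as [N' HN']. lia.
    exists (max N N'). intros m Hm. destruct (Nat.eq_dec m n).
    + subst. eapply Hmono; eauto; lia.
    + eapply Hmono. apply HN; lia. lia.
Qed.

Definition FU P f e xs v := exists N, forall r, N <= len r -> agree f r -> evalU (po P r) e xs v.
Definition FUs P f gs xs ys := exists N, forall r, N <= len r -> agree f r -> evalsU (po P r) gs xs ys.

Lemma finite_use P f :
  forall e xs v, eval (join (coloring_set f) P) e xs v -> FU P f e xs v.
Proof.
  apply (eval_ind3 (join (coloring_set f) P) (FU P f) (FUs P f)); unfold FU, FUs; intros.
  - exists 0; intros; constructor.
  - exists 0; intros; constructor.
  - exists 0; intros; constructor.
  - exists (S (usnd (Nat.div2 (hd 0 xs)))). intros r Hr Ha.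
    apply (uOrac _ _ true). set (q := hd 0 xs) in *.
    assert (exists b, po P r q = Some b) as [b Hb].
    { unfold po. destruct (Nat.even q); eauto.
      destruct (_ <? _); eauto. destruct (Nat.ltb_spec (usnd (Nat.div2 q)) (len r)); eauto; lia. }
    pose proof (po_transfer P f r q b Ha Hb). destruct b; auto. apply H0 in H. discriminate.
  - exists (S (usnd (Nat.div2 (hd 0 xs)))). intros r Hr Ha.
    apply (uOrac _ _ false). set (q := hd 0 xs) in *.
    assert (exists b, po P r q = Some b) as [b Hb].
    { unfold po. destruct (Nat.even q); eauto.
      destruct (_ <? _); eauto. destruct (Nat.ltb_spec (usnd (Nat.div2 q)) (len r)); eauto; lia. }
    pose proof (po_transfer P f r q b Ha Hb). destruct b; auto. exfalso; apply H, H0; auto.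
  - destruct H0 as [N1 K1], H2 as [N2 K2]. exists (max N1 N2); intros.
    econstructor; [apply K1|apply K2]; auto; lia.
  - destruct H0 as [N1 K1]. exists N1; intros. constructor; auto.
  - destruct H0 as [N1 K1], H2 as [N2 K2]. exists (max N1 N2); intros.
    econstructor; [apply K1|apply K2]; auto; lia.
  - destruct H0 as [N1 K1].
    destruct (max_bound n (fun m N => exists k, forall r, N <= len r -> agree f r -> evalU (po P r) f0 (m :: xs) (S k)))
      as [N2 K2].
    + intros m N N' [k Hk] HN. exists k; intros; apply Hk; auto; lia.
    + intros m Hm. destruct (H1 m Hm) as [k [_ [N HN]]]. eauto.
    + exists (max N1 N2). intros r Hr Ha. constructor. apply K1; auto; lia.
      intros m Hm. destruct (K2 m Hm) as [k Hk]. exists k. apply Hk; auto; lia.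
  - exists 0; intros; constructor.
  - destruct H0 as [N1 K1], H2 as [N2 K2]. exists (max N1 N2); intros.
    econstructor; [apply K1|apply K2]; auto; lia.
Qed.

Lemma po_mono P r r' q b : extends r' r -> po P r q = Some b -> po P r' q = Some b.
Proof.
  intros (H1&H2&H3). unfold po. destruct (Nat.even q); auto.
  destruct (_ <? _) eqn:E; auto. apply Nat.ltb_lt in E.
  destruct (Nat.ltb_spec (usnd (Nat.div2 q)) (len r)); [|discriminate].
  destruct (Nat.ltb_spec (usnd (Nat.div2 q)) (len r')); [|lia].
  rewrite H2; auto.
Qed.

Lemma po_same P r r' q : same r r' -> po P r q = po P r' q.
Proof.
  intros (H1&H2&H3). unfold po. destruct (Nat.even q); auto.
  destruct (_ <? _) eqn:E; auto. apply Nat.ltb_lt in E. rewrite H1.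
  destruct (Nat.ltb_spec (usnd (Nat.div2 q)) (len r')); auto. rewrite H2; auto; lia.
Qed.

From Stdlib Require Import Arith List Lia.
Import ListNotations.

Definition code_ind2 (Q : code -> Prop) (hZ : Q Zero) (hS : Q Succ) (hP : forall i, Q (Proj i))
  (hO : Q Orac) (hC : forall f gs, Q f -> Forall Q gs -> Q (Comp f gs))
  (hPr : forall f g, Q f -> Q g -> Q (Prec f g)) (hMu : forall f, Q f -> Q (Mu f)) : forall e, Q e :=
  fix F e := match e return Q e with
  | Zero => hZ | Succ => hS | Proj i => hP i | Orac => hO
  | Comp f gs => hC f gs (F f) ((fix G l := match l return Forall Q l with
        [] => Forall_nil Q | g :: l => Forall_cons g (F g) (G l) end) gs)
  | Prec f g => hPr f g (F f) (F g)
  | Mu f => hMu f (F f) end.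

Fixpoint projs a b := match b with 0 => [] | S b => Proj a :: projs (S a) b end.
Lemma ev_projs A l : forall pre post, evals A (projs (length pre) (length l)) (pre ++ l ++ post) l.
Proof.
  induction l; intros; simpl. constructor. constructor.
  - eapply eval_conv. constructor. rewrite app_nth2 by lia. rewrite Nat.sub_diag. reflexivity.
  - specialize (IHl (pre ++ [a]) post). rewrite length_app in IHl. simpl in IHl.
    rewrite <- app_assoc in IHl. replace (length pre + 1) with (S (length pre)) in IHl by lia. exact IHl.
Qed.
Lemma ev_projs' A l pre : evals A (projs (length pre) (length l)) (pre ++ l) l.
Proof. pose proof (ev_projs A l pre []). rewrite app_nil_r in H. exact H. Qed.

Definition oenc (o : option bool) := match o with Some b => S (b2n b) | None => 0 end.

Lemma even_eqb q : (2 * Nat.div2 q =? q) = Nat.even q.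
Proof.
  pose proof (Nat.div2_odd q). rewrite <- Nat.negb_odd.
  destruct (Nat.odd q); simpl in *; [apply Nat.eqb_neq|apply Nat.eqb_eq]; lia.
Qed.

Definition EVEN g := EQ (MUL (Cn 2) (HALF g)) g.
Lemma ev_EVEN A g xs a : eval A g xs a -> eval A (EVEN g) xs (b2n (Nat.even a)).
Proof. intros. rewrite <- even_eqb. apply ev_EQ; auto. apply ev_MUL. apply ev_C. apply ev_HALF; auto. Qed.

Definition IDX x y := ADD (TRI (PRED y)) x.
Definition SIGBIT n x y := EQ (NTHE (IDX x y) (NTHE (Cn 1) n)) (Cn 1).
Lemma ev_SIGBIT A n x y xs a b c : eval A n xs a -> eval A x xs b -> eval A y xs c ->
  eval A (SIGBIT n x y) xs (b2n (dsig a b c)).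
Proof. intros. apply ev_EQ. apply ev_NTHE. apply ev_ADD; auto. apply ev_TRI, ev_PRED; auto.
  apply ev_NTHE; auto. apply ev_C. apply ev_C. Qed.

Lemma ev_OracP P d : eval P Orac [d] (b2n (pdec P d)).
Proof. destruct (pdec P d) eqn:E.
  - apply pdec_spec in E. apply (eOracT P [d]). exact E.
  - apply (eOracF P [d]). intro H. apply pdec_spec in H. simpl in H. congruence. Qed.

Definition ORAC :=
  let J := HALF (Proj 2) in let X := UFST J in let Y := USND J in
  IF (EVEN (Proj 2)) (IF (LT X Y) (IF (LT Y (NTHE (Cn 0) (Proj 1))) (SUCC (SIGBIT (Proj 1) X Y)) (Cn 0)) (Cn 1))
     (SUCC (Comp Orac [J])).

Lemma ev_ORAC P t n xs : eval P ORAC (t :: n :: xs) (oenc (po P (dec n) (hd 0 xs))).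
Proof.
  unfold ORAC, po. set (q := hd 0 xs).
  assert (Hq : eval P (Proj 2) (t :: n :: xs) q) by (eapply eval_conv; [constructor|destruct xs; reflexivity]).
  eapply eval_conv. apply ev_IF. apply ev_EVEN, Hq.
  apply ev_IF. apply ev_LT; [apply ev_UFST|apply ev_USND]; apply ev_HALF, Hq.
  apply ev_IF. apply ev_LT. apply ev_USND, ev_HALF, Hq. apply ev_NTHE. apply ev_C. constructor.
  apply ev_SUCC, ev_SIGBIT. constructor. apply ev_UFST, ev_HALF, Hq. apply ev_USND, ev_HALF, Hq.
  apply ev_C. apply ev_C.
  apply ev_SUCC. eapply ev_comp1. apply ev_HALF, Hq.
  apply ev_OracP.
  - simpl. destruct (Nat.even q); [|destruct (pdec P (Nat.div2 q)); reflexivity].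
    destruct (ufst (Nat.div2 q) <? usnd (Nat.div2 q)); [|reflexivity].
    destruct (usnd (Nat.div2 q) <? nthe 0 n); reflexivity.
Qed.

Definition precIt (F : nat) (G : nat -> nat -> nat) : nat -> nat :=
  fix it m := match m with 0 => F | S i => let a := it i in if negb (a =? 0) then G i (pred a) else 0 end.
Definition muIt (V : nat -> nat) : nat -> nat :=
  fix it i := match i with 0 => 0 | S i => let a := it i in
     if negb (a =? 0) then a else (if V i =? 0 then 1 else if V i =? 1 then S (S i) else 0) end.

Fixpoint run P (k t n : nat) (e : code) (xs : list nat) {struct e} : nat :=
  match e with
  | Zero => 1
  | Succ => S (S (hd 0 xs))
  | Proj i => S (nth i xs 0)
  | Orac => oenc (po P (dec n) (hd 0 xs))
  | Comp f gs => let ws := map (fun g => run P k t n g xs) gs in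
      b2n (forallb (fun w => negb (w =? 0)) ws) * run P (length gs) t n f (map pred ws)
  | Prec f g => match k with 0 => 0 | S k' =>
      precIt (run P k' t n f (tl xs)) (fun i a => run P (S k) t n g (i :: a :: tl xs)) (hd 0 xs) end
  | Mu f => let st := muIt (fun i => run P (S k) t n f (i :: xs)) t in
      if 2 <=? st then pred st else 0
  end.

Fixpoint allposP (l : list code) := match l with [] => Cn 1 | g :: l => MUL (NZ g) (allposP l) end.
Definition GPREC g' k' := IF (NZ (Proj 1))
  (Comp g' (Proj 2 :: Proj 3 :: Proj 0 :: PRED (Proj 1) :: projs 4 k')) (Cn 0).
Definition GMU f' k := let v := Comp f' (Proj 2 :: Proj 3 :: Proj 0 :: projs 4 k) in
  IF (NZ (Proj 1)) (Proj 1) (IF (EQ v (Cn 0)) (Cn 1) (IF (EQ v (Cn 1)) (SUCC (SUCC (Proj 0))) (Cn 0))).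
Definition POSTMU s := IF (LE (Cn 2) s) (PRED s) (Cn 0).

Fixpoint comp (k : nat) (e : code) {struct e} : code :=
  match e with
  | Zero => Cn 1
  | Succ => SUCC (SUCC (Proj 2))
  | Proj i => SUCC (Proj (S (S i)))
  | Orac => ORAC
  | Comp f gs => MUL (allposP (map (comp k) gs))
      (Comp (comp (length gs) f) (Proj 0 :: Proj 1 :: map PRED (map (comp k) gs)))
  | Prec f g => match k with 0 => Zero | S k' =>
      Comp (Prec (comp k' f) (GPREC (comp (S k) g) k')) (Proj 2 :: Proj 0 :: Proj 1 :: projs 3 k') end
  | Mu f => POSTMU (Comp (Prec Zero (GMU (comp (S k) f) k)) (Proj 0 :: Proj 0 :: Proj 1 :: projs 2 k))
  end.

From Stdlib Require Import Arith List Lia.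
Import ListNotations.
Arguments Cn : simpl never.

Lemma ev_allpos A gs xs ws : evals A gs xs ws ->
  eval A (allposP gs) xs (b2n (forallb (fun w => negb (w =? 0)) ws)).
Proof.
  induction 1; simpl. apply ev_C.
  eapply eval_conv. apply ev_MUL. apply ev_NZ; eauto. eauto.
  destruct (negb (y =? 0)); simpl; lia.
Qed.

Lemma evals_map_PRED A gs xs ws : evals A gs xs ws -> evals A (map PRED gs) xs (map pred ws).
Proof. induction 1; simpl; constructor; auto. apply ev_PRED; auto. Qed.

Lemma ev_pr2 A a b rest k : length rest = k -> evals A (projs 2 k) (a::b::rest) rest.
Proof. intros <-. exact (ev_projs' A rest [a;b]). Qed.
Lemma ev_pr3 A a b c rest k : length rest = k -> evals A (projs 3 k) (a::b::c::rest) rest.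
Proof. intros <-. exact (ev_projs' A rest [a;b;c]). Qed.
Lemma ev_pr4 A a b c d rest k : length rest = k -> evals A (projs 4 k) (a::b::c::d::rest) rest.
Proof. intros <-. exact (ev_projs' A rest [a;b;c;d]). Qed.

Lemma comp_ok P e : forall k t n xs, length xs = k ->
  eval P (comp k e) (t :: n :: xs) (run P k t n e xs).
Proof.
  induction e using code_ind2; intros k t n xs Hk; cbn [comp run].
  - apply ev_C.
  - apply ev_SUCC, ev_SUCC. eapply eval_conv. constructor. destruct xs; reflexivity.
  - apply ev_SUCC. eapply eval_conv; [constructor|reflexivity].
  - apply ev_ORAC.
  - set (ws := map (fun g => run P k t n g xs) gs).
    assert (Hws : evals P (map (comp k) gs) (t :: n :: xs) ws).
    { subst ws. clear IHe. induction H; simpl; constructor; auto. }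
    apply ev_MUL. apply ev_allpos; auto.
    econstructor. constructor. constructor. constructor. constructor.
    apply evals_map_PRED; eauto.
    apply IHe. subst ws. rewrite !length_map. reflexivity.
  - destruct k as [|k']. constructor.
    destruct xs as [|m rest]; [discriminate|]. simpl in Hk. injection Hk; intro Hk'.
    econstructor.
    + constructor. constructor. constructor. constructor. constructor. constructor.
      apply ev_pr3; auto.
    + simpl tl. simpl hd.
      apply (ev_prec P _ _ _ (precIt (run P k' t n e1 rest) (fun i a => run P (S (S k')) t n e2 (i :: a :: rest)))).
      * apply IHe1; auto.
      * intro i. simpl. unfold GPREC. apply ev_IF. apply ev_NZ. constructor.
        econstructor. constructor. constructor. constructor. constructor. constructor.
        constructor. constructor. apply ev_PRED. constructor.
        apply ev_pr4; auto.
        apply IHe2. simpl; lia. apply ev_C.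
  - apply ev_IF. apply ev_LE. apply ev_C.
    2: apply ev_PRED. 3: apply ev_C.
    all: econstructor; [constructor; [constructor|constructor;[constructor|constructor;[constructor|]]]|].
    all: try (apply ev_pr2; auto).
    all: apply (ev_prec P _ _ _ (muIt (fun i => run P (S k) t n e (i :: xs)))); [constructor|].
    all: intro i; unfold GMU; simpl.
    all: assert (Hv : eval P (Comp (comp (S k) e) (Proj 2 :: Proj 3 :: Proj 0 :: projs 4 k))
            (i :: muIt (fun i => run P (S k) t n e (i :: xs)) i :: t :: n :: xs) (run P (S k) t n e (i :: xs)))
         by (econstructor; [constructor;[constructor|constructor;[constructor|constructor;[constructor|]]]|];
          [apply ev_pr4; auto | apply IHe; simpl; lia]).
    all: apply ev_IF; [apply ev_NZ; constructor|constructor|].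
    all: apply ev_IF; [apply ev_EQ; [exact Hv|apply ev_C]|apply ev_C|].
    all: apply ev_IF; [apply ev_EQ; [exact Hv|apply ev_C]|apply ev_SUCC, ev_SUCC; constructor|apply ev_C].
Qed.

From Stdlib Require Import Arith List Lia.
Import ListNotations.

Lemma muIt_sound V t m : muIt V t = S (S m) -> m < t /\ V m = 1 /\ forall i, i < m -> 2 <= V i.
Proof.
  induction t; simpl. discriminate.
  destruct (muIt V t) as [|a] eqn:E; simpl.
  - assert (forall i, i < t -> 2 <= V i).
    { clear IHt. intros i Hi. revert E. induction t; simpl; intro E. lia.
      destruct (muIt V t) eqn:E'; simpl in E. 
      - destruct (Nat.eqb_spec (V t) 0); [discriminate|]. destruct (Nat.eqb_spec (V t) 1); [discriminate|].
        destruct (Nat.eq_dec i t). subst; lia. apply IHt; auto; lia.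
      - discriminate. }
    destruct (Nat.eqb_spec (V t) 0); [discriminate|]. destruct (Nat.eqb_spec (V t) 1); [|discriminate].
    intro Hm; injection Hm; intros <-. repeat split; auto.
  - intro H; destruct (IHt H) as (?&?&?). repeat split; auto.
Qed.

Lemma muIt_complete V t m : m < t -> V m = 1 -> (forall i, i < m -> 2 <= V i) -> muIt V t = S (S m).
Proof.
  intros Ht Hm Hi. induction t. lia.
  destruct (Nat.eq_dec m t).
  - subst. simpl. assert (muIt V t = 0).
    { clear Ht. assert (forall j, j <= t -> muIt V j = 0).
      { induction j; simpl; intros; auto. rewrite IHj by lia. simpl.
        destruct (Nat.eqb_spec (V j) 0). specialize (Hi j); lia.
        destruct (Nat.eqb_spec (V j) 1). specialize (Hi j); lia. reflexivity. }
      apply H; lia. }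
    rewrite H. simpl. rewrite Hm. reflexivity.
  - simpl. rewrite IHt by lia. reflexivity.
Qed.

Lemma run_sound P e : forall k t n xs v, length xs = k -> run P k t n e xs = S v ->
  evalU (po P (dec n)) e xs v.
Proof.
  induction e using code_ind2; intros k t n xs v Hk Hr; cbn [run] in Hr.
  - injection Hr; intros <-; constructor.
  - injection Hr; intros <-; constructor.
  - injection Hr; intros <-; constructor.
  - destruct (po P (dec n) (hd 0 xs)) eqn:E; simpl in Hr; [|discriminate].
    injection Hr; intros <-. constructor; auto.
  - set (ws := map (fun g => run P k t n g xs) gs) in Hr.
    destruct (forallb (fun w => negb (w =? 0)) ws) eqn:Ef; simpl in Hr; [|discriminate].
    rewrite Nat.add_0_r in Hr.
    econstructor. 2: { eapply IHe; [|exact Hr]. subst ws. rewrite !length_map; reflexivity. }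
    subst ws. clear Hr IHe. induction H; simpl in *; constructor.
    + apply andb_prop in Ef. destruct Ef as [E1 _].
      destruct (run P k t n x xs) eqn:Er; [discriminate|]. simpl. eapply H; eauto.
    + apply IHForall. apply andb_prop in Ef; tauto.
  - destruct k as [|k']; [discriminate|]. destruct xs as [|m rest]; [discriminate|].
    simpl in Hk. injection Hk; intro Hk'. simpl in Hr. revert v Hr.
    induction m; intros v Hr; simpl in Hr.
    + constructor. eapply IHe1; eauto.
    + destruct (precIt (run P k' t n e1 rest) (fun i a => run P (S (S k')) t n e2 (i :: a :: rest)) m) as [|r] eqn:E;
        simpl in Hr; [discriminate|].
      econstructor. apply IHm; eauto. eapply IHe2; [|exact Hr]. simpl; lia.
  - destruct (Nat.leb_spec 2 (muIt (fun i => run P (S k) t n e (i :: xs)) t)) as [Hl|Hl]; [|discriminate].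
    destruct (muIt (fun i => run P (S k) t n e (i :: xs)) t) as [|[|m]] eqn:E; try lia.
    simpl in Hr. injection Hr; intros <-.
    apply muIt_sound in E. destruct E as (Ht&Hm&Hi).
    constructor. eapply IHe; [|exact Hm]. simpl; lia.
    intros i Hi'. specialize (Hi i Hi').
    destruct (run P (S k) t n e (i :: xs)) as [|[|k0]] eqn:Ei; try lia.
    exists k0. eapply IHe; [|exact Ei]. simpl; lia.
Qed.

Lemma precIt_S F G m : precIt F G (S m) =
  (let a := precIt F G m in if negb (a =? 0) then G m (pred a) else 0).
Proof. reflexivity. Qed.

Lemma run_complete P n : forall e xs v, evalU (po P (dec n)) e xs v ->
  forall k, length xs = k -> exists t0, forall t, t0 <= t -> run P k t n e xs = S v.
Proof.
  apply (evalU_ind3 (po P (dec n))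
    (fun e xs v => forall k, length xs = k -> exists t0, forall t, t0 <= t -> run P k t n e xs = S v)
    (fun gs xs ys => length ys = length gs /\ forall k, length xs = k -> exists t0, forall t, t0 <= t ->
        map (fun g => run P k t n g xs) gs = map S ys)).
  - intros; exists 0; reflexivity.
  - intros; exists 0; reflexivity.
  - intros; exists 0; reflexivity.
  - intros xs b Hb k _; exists 0; intros; cbn [run]. rewrite Hb. reflexivity.
  - intros f gs xs ys y _ [Hl Hgs] _ Hf k Hk.
    destruct (Hgs k Hk) as [t1 H1]. destruct (Hf (length ys) eq_refl) as [t2 H2].
    exists (max t1 t2). intros t Ht. cbn [run]. rewrite H1 by lia.
    rewrite map_map, map_id. rewrite <- Hl, H2 by lia.
    assert (forallb (fun w => negb (w =? 0)) (map S ys) = true).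
    { clear. induction ys; simpl; auto. }
    rewrite H. simpl. lia.
  - intros f g xs y _ Hf k Hk. destruct k as [|k']; [discriminate|]. simpl in Hk.
    destruct (Hf k' ltac:(lia)) as [t1 H1]. exists t1. intros t Ht. cbn [run tl hd]. simpl. apply H1; auto.
  - intros f g n0 xs r y _ Hp _ Hg k Hk. destruct k as [|k']; [discriminate|]. simpl in Hk.
    destruct (Hp (S k') ltac:(simpl; lia)) as [t1 H1]. destruct (Hg (S (S k')) ltac:(simpl; lia)) as [t2 H2].
    exists (max t1 t2). intros t Ht. specialize (H1 t ltac:(lia)). specialize (H2 t ltac:(lia)).
    cbn [run tl hd] in *. rewrite precIt_S. cbv zeta. rewrite H1. simpl. exact H2.
  - intros f xs n0 _ Hf Hm k Hk.
    destruct (Hf (S k) ltac:(simpl; lia)) as [t1 H1].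
    destruct (max_bound n0 (fun m N => exists k0, forall t, N <= t -> run P (S k) t n f (m :: xs) = S (S k0)))
      as [T HT].
    + intros m N N' [k0 Hk0] HN. exists k0; intros; apply Hk0; lia.
    + intros m Hm'. destruct (Hm m Hm') as [k0 [_ Hk0]]. destruct (Hk0 (S k) ltac:(simpl; lia)) as [t2 H2].
      eauto.
    + exists (max T (max t1 (S n0))). intros t Ht. cbn [run].
      rewrite (muIt_complete _ t n0).
      * simpl. reflexivity.
      * lia.
      * apply H1; lia.
      * intros i Hi. destruct (HT i Hi) as [k0 Hk0]. rewrite Hk0 by lia. lia.
  - intros; split; auto. intros; exists 0; reflexivity.
  - intros g gs xs y ys _ Hg _ [Hl Hgs]. split. simpl; auto.
    intros k Hk. destruct (Hg k Hk) as [t1 H1]. destruct (Hgs k Hk) as [t2 H2].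
    exists (max t1 t2). intros t Ht. simpl. rewrite H1, H2 by lia. reflexivity.
Qed.

From Stdlib Require Import Arith List Lia Bool.
Import ListNotations.
Arguments Cn : simpl never.

Definition BF j p := Prec (Cn 1) (MUL (Proj 1) (NZ (Comp p (Proj 0 :: projs 2 j)))).
Lemma ev_BF A j p xs (pb : nat -> bool) : length xs = j ->
  (forall i, eval A p (i :: xs) (b2n (pb i))) ->
  forall L, eval A (BF j p) (L :: xs) (b2n (forallb pb (seq 0 L))).
Proof.
  intros Hj Hp. apply (ev_prec A _ _ _ (fun L => b2n (forallb pb (seq 0 L)))).
  apply ev_C. intro i. eapply eval_conv. apply ev_MUL. constructor. apply ev_NZ.
  econstructor. constructor. constructor. apply ev_pr2; auto. apply Hp.
  rewrite seq_S, forallb_app. simpl. destruct (forallb pb (seq 0 i)), (pb i); reflexivity.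
Qed.

Definition OR g h := NOT (AND (NOT g) (NOT h)).
Lemma ev_OR A g h xs a b : eval A g xs (b2n a) -> eval A h xs (b2n b) -> eval A (OR g h) xs (b2n (a || b)).
Proof. intros. eapply eval_conv. apply ev_NOT, ev_AND; apply ev_NOT; eauto. destruct a, b; reflexivity. Qed.
Definition BEQ g h := EQ g h.
Lemma ev_BEQ A g h xs a b : eval A g xs (b2n a) -> eval A h xs (b2n b) -> eval A (BEQ g h) xs (b2n (Bool.eqb a b)).
Proof. intros. eapply eval_conv. apply ev_EQ; eauto. destruct a, b; reflexivity. Qed.

Definition LEN n := NTHE (Cn 0) n.
Lemma ev_LEN A g xs a : eval A g xs a -> eval A (LEN g) xs (len (dec a)).
Proof. intros; apply ev_NTHE; auto. apply ev_C. Qed.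
Definition LABV n x := NTHE x (NTHE (Cn 2) n).
Definition LABC n x := NZ (UFST (LABV n x)).
Definition LABZ n x := USND (LABV n x).
Lemma ev_LABC A n x xs a b : eval A n xs a -> eval A x xs b -> eval A (LABC n x) xs (b2n (fst (lab (dec a) b))).
Proof. intros. apply ev_NZ, ev_UFST, ev_NTHE; auto. apply ev_NTHE; auto. apply ev_C. Qed.
Lemma ev_LABZ A n x xs a b : eval A n xs a -> eval A x xs b -> eval A (LABZ n x) xs (snd (lab (dec a) b)).
Proof. intros. apply ev_USND, ev_NTHE; auto. apply ev_NTHE; auto. apply ev_C. Qed.
Lemma ev_SIG A n x y xs a b c : eval A n xs a -> eval A x xs b -> eval A y xs c ->
  eval A (SIGBIT n x y) xs (b2n (sig (dec a) b c)).
Proof. apply ev_SIGBIT. Qed.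

Definition validb n := let L := len (dec n) in
  forallb (fun x => forallb (fun y => negb ((x <? y) && (snd (lab (dec n) x) <=? y)) ||
     Bool.eqb (sig (dec n) x y) (fst (lab (dec n) x))) (seq 0 L)) (seq 0 L).
Definition VBODY := OR (NOT (AND (LT (Proj 1) (Proj 0)) (LE (LABZ (Proj 2) (Proj 1)) (Proj 0))))
   (BEQ (SIGBIT (Proj 2) (Proj 1) (Proj 0)) (LABC (Proj 2) (Proj 1))).
Definition VALIDP := Comp (BF 1 (Comp (BF 2 VBODY) [LEN (Proj 1); Proj 0; Proj 1])) [LEN (Proj 0); Proj 0].
Lemma ev_VALIDP A n : eval A VALIDP [n] (b2n (validb n)).
Proof.
  eapply ev_comp2. apply ev_LEN; constructor. constructor.
  apply ev_BF; auto. intro x. eapply ev_comp3. apply ev_LEN; constructor. constructor. constructor.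
  apply ev_BF; auto. intro y. apply ev_OR. apply ev_NOT, ev_AND. apply ev_LT; constructor.
  apply ev_LE; [apply ev_LABZ|]; constructor. apply ev_BEQ. apply ev_SIG; constructor. apply ev_LABC; constructor.
Qed.

Lemma validb_spec n : validb n = true <-> valid (dec n).
Proof.
  unfold validb, valid. rewrite forallb_forall. split.
  - intros H x y Hxy Hy Hz. specialize (H x ltac:(apply in_seq; lia)).
    rewrite forallb_forall in H. specialize (H y ltac:(apply in_seq; lia)).
    apply Nat.ltb_lt in Hxy. apply Nat.leb_le in Hz. rewrite Hxy, Hz in H. simpl in H.
    apply Bool.eqb_prop in H. auto.
  - intros H x Hx. rewrite forallb_forall. intros y Hy. apply in_seq in Hx, Hy.
    destruct (Nat.ltb_spec x y); destruct (Nat.leb_spec (snd (lab (dec n) x)) y); simpl; auto.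
    change (dsig n x y) with (sig (dec n) x y). rewrite H by lia. apply Bool.eqb_reflx.
Qed.

Definition extb r q := let Lq := len (dec q) in
  (Lq <=? len (dec r)) &&
  (forallb (fun x => forallb (fun y => negb (x <? y) || Bool.eqb (sig (dec r) x y) (sig (dec q) x y)) (seq 0 Lq)) (seq 0 Lq) &&
   forallb (fun x => Bool.eqb (fst (lab (dec r) x)) (fst (lab (dec q) x)) && (snd (lab (dec r) x) =? snd (lab (dec q) x))) (seq 0 Lq)).
Definition EBODY := OR (NOT (LT (Proj 1) (Proj 0))) (BEQ (SIGBIT (Proj 2) (Proj 1) (Proj 0)) (SIGBIT (Proj 3) (Proj 1) (Proj 0))).
Definition LBODY := AND (BEQ (LABC (Proj 1) (Proj 0)) (LABC (Proj 2) (Proj 0))) (EQ (LABZ (Proj 1) (Proj 0)) (LABZ (Proj 2) (Proj 0))).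
Definition EXTP := AND (LE (LEN (Proj 1)) (LEN (Proj 0)))
  (AND (Comp (BF 2 (Comp (BF 3 EBODY) [LEN (Proj 2); Proj 0; Proj 1; Proj 2])) [LEN (Proj 1); Proj 0; Proj 1])
       (Comp (BF 2 LBODY) [LEN (Proj 1); Proj 0; Proj 1])).
Lemma ev_EXTP A r q : eval A EXTP [r; q] (b2n (extb r q)).
Proof.
  apply ev_AND. apply ev_LE; apply ev_LEN; constructor. apply ev_AND.
  - eapply ev_comp3. apply ev_LEN; constructor. constructor. constructor.
    apply ev_BF; auto. intro x. econstructor. constructor. apply ev_LEN; constructor.
    constructor. constructor. constructor. constructor. constructor. constructor. constructor.
    apply ev_BF; auto. intro y. apply ev_OR. apply ev_NOT, ev_LT; constructor.
    apply ev_BEQ; apply ev_SIG; constructor.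
  - eapply ev_comp3. apply ev_LEN; constructor. constructor. constructor.
    apply ev_BF; auto. intro x. apply ev_AND. apply ev_BEQ; apply ev_LABC; constructor.
    apply ev_EQ; apply ev_LABZ; constructor.
Qed.

Lemma extb_spec r q : extb r q = true <-> extends (dec r) (dec q).
Proof.
  unfold extb, extends. rewrite !andb_true_iff, !forallb_forall, Nat.leb_le. split.
  - intros (H1&H2&H3). split; auto. split.
    + intros x y Hxy Hy. specialize (H2 x ltac:(apply in_seq; lia)).
      rewrite forallb_forall in H2. specialize (H2 y ltac:(apply in_seq; lia)).
      apply Nat.ltb_lt in Hxy. rewrite Hxy in H2. simpl in H2. apply Bool.eqb_prop; auto.
    + intros x Hx. specialize (H3 x ltac:(apply in_seq; lia)). apply andb_true_iff in H3.
      destruct H3 as [E1 E2]. apply Bool.eqb_prop in E1. apply Nat.eqb_eq in E2.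
      destruct (lab (dec r) x), (lab (dec q) x); simpl in *; subst; auto.
  - intros (H1&H2&H3). split; auto. split.
    + intros x Hx. apply in_seq in Hx. rewrite forallb_forall. intros y Hy. apply in_seq in Hy.
      destruct (Nat.ltb_spec x y); simpl; auto. change (dsig r x y) with (sig (dec r) x y); change (dsig q x y) with (sig (dec q) x y). rewrite H2 by lia. apply Bool.eqb_reflx.
    + intros x Hx. apply in_seq in Hx. rewrite H3 by lia. rewrite Bool.eqb_reflx, Nat.eqb_refl. reflexivity.
Qed.

From Stdlib Require Import Arith List Lia Bool.
Import ListNotations.
Arguments Cn : simpl never.

Definition sim P e t n x := run P 1 t n e [x].
Definition SIM e t n x := Comp (comp 1 e) [t; n; x].
Lemma ev_SIM P e t n x xs a b c : eval P t xs a -> eval P n xs b -> eval P x xs c ->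
  eval P (SIM e t n x) xs (sim P e a b c).
Proof. intros. eapply ev_comp3; eauto. apply comp_ok. reflexivity. Qed.

Definition Rb P e n a b :=
  if nthe 0 a =? 0 then
    let x1 := nthe 1 a in let x2 := nthe 2 a in let x3 := nthe 3 a in let t := nthe 4 a in
    (x1 <? x2) && ((x2 <? x3) && ((x3 <? len (dec n)) && ((sim P e t n x1 =? 2) &&
      ((sim P e t n x2 =? 2) && ((sim P e t n x3 =? 2) &&
       negb (Bool.eqb (sig (dec n) x1 x2) (sig (dec n) x2 x3)))))))
  else
    let m := nthe 1 a in let rb := nthe 0 b in let x := nthe 1 b in let t := nthe 2 b in
    negb (validb rb && (extb rb n && ((m <=? x) && ((x <? len (dec rb)) && (sim P e t rb x =? 2))))).

Definition RP e :=
  let n := Proj 0 in let a := Proj 1 in let b := Proj 2 in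
  let x1 := NTHE (Cn 1) a in let x2 := NTHE (Cn 2) a in let x3 := NTHE (Cn 3) a in let t := NTHE (Cn 4) a in
  let m := NTHE (Cn 1) a in let rb := NTHE (Cn 0) b in let x := NTHE (Cn 1) b in let t' := NTHE (Cn 2) b in
  IF (EQ (NTHE (Cn 0) a) (Cn 0))
    (AND (LT x1 x2) (AND (LT x2 x3) (AND (LT x3 (LEN n)) (AND (EQ (SIM e t n x1) (Cn 2))
      (AND (EQ (SIM e t n x2) (Cn 2)) (AND (EQ (SIM e t n x3) (Cn 2))
        (NOT (BEQ (SIGBIT n x1 x2) (SIGBIT n x2 x3)))))))))
    (NOT (AND (Comp VALIDP [rb]) (AND (Comp EXTP [rb; n]) (AND (LE m x) (AND (LT x (LEN rb))
       (EQ (SIM e t' rb x) (Cn 2))))))).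

Lemma ev_RP P e n a b : eval P (RP e) [n; a; b] (b2n (Rb P e n a b)).
Proof.
  unfold RP, Rb. cbv zeta.
  assert (HN : forall i g v, eval P g [n;a;b] v -> eval P (NTHE (Cn i) g) [n;a;b] (nthe i v))
    by (intros; apply ev_NTHE; auto; apply ev_C).
  match goal with |- eval _ (IF ?c ?g ?h) _ (b2n (if _ then ?X else ?Y)) =>
    assert (H1 : eval P g [n;a;b] (b2n X)); [|assert (H2 : eval P h [n;a;b] (b2n Y))] end.
  - repeat (apply ev_AND).
    all: try (apply ev_LT; try apply ev_LEN; try apply HN; constructor).
    all: try (apply ev_EQ; [apply ev_SIM; try apply HN; constructor | apply ev_C]).
    apply ev_NOT, ev_BEQ; apply ev_SIG; try apply HN; constructor.
  - apply ev_NOT. repeat (apply ev_AND).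
    eapply ev_comp1. apply HN; constructor. apply ev_VALIDP.
    eapply ev_comp2. apply HN; constructor. constructor. apply ev_EXTP.
    apply ev_LE; apply HN; constructor.
    apply ev_LT. apply HN; constructor. apply ev_LEN, HN; constructor.
    apply ev_EQ; [apply ev_SIM; try apply HN; constructor | apply ev_C].
  - assert (Hc : eval P (EQ (NTHE (Cn 0) (Proj 1)) (Cn 0)) [n;a;b] (b2n (nthe 0 a =? 0)))
      by (apply ev_EQ; [apply HN; constructor| apply ev_C]).
    pose proof (ev_IF P _ _ _ _ _ _ _ Hc H1 H2) as HH. destruct (nthe 0 a =? 0); exact HH.
Qed.

Definition RTOP e := Comp (RP e) [NTHE (Cn 0) (Proj 0); NTHE (Cn 1) (Proj 0); NTHE (Cn 2) (Proj 0)].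
Definition Rr P e k := Rb P e (nthe 0 k) (nthe 1 k) (nthe 2 k) = true.
Definition Sset P e n := exists a, forall b, exists c, Rr P e (encode_list [n; a; b; c]).

Lemma Sset_sigma P e : Sigma03 P (Sset P e).
Proof.
  exists (Rr P e). split; [|intro; reflexivity].
  exists (RTOP e). intro k.
  assert (H : eval P (RTOP e) [k] (b2n (Rb P e (nthe 0 k) (nthe 1 k) (nthe 2 k)))).
  { eapply ev_comp3; try (apply ev_NTHE; [apply ev_C|constructor]). apply ev_RP. }
  unfold Rr. split; intro HR.
  - rewrite HR in H. exact H.
  - apply not_true_is_false in HR. rewrite HR in H. exact H.
Qed.

Lemma Rr_enc P e n a b c : Rr P e (encode_list [n; a; b; c]) <-> Rb P e n a b = true.
Proof. unfold Rr. rewrite !nthe_enc. reflexivity. Qed.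

From Stdlib Require Import Arith List Lia Bool Classical.
Import ListNotations.
Arguments Cn : simpl never.

Definition relabel (r : cond) (n0 : nat) (c : bool) : cond :=
  mkCond (len r) (sig r) (fun x => if x <? n0 then lab r x else (c, len r)).

Lemma relabel_valid r n0 c : valid r -> valid (relabel r n0 c).
Proof.
  intros Hv x y Hxy Hy Hz. unfold relabel in *; simpl in *.
  destruct (Nat.ltb_spec x n0). apply Hv; auto. simpl in Hz. lia.
Qed.

Lemma relabel_ext r q n0 c : extends r q -> len q <= n0 -> extends (relabel r n0 c) q.
Proof.
  intros (H1&H2&H3) Hn. split; [simpl; lia|split]; simpl; auto.
  intros x Hx. destruct (Nat.ltb_spec x n0); auto. lia.
Qed.

Lemma po_relabel P r n0 c q : po P (relabel r n0 c) q = po P r q.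
Proof. reflexivity. Qed.

Lemma evalU_eqor (O O' : nat -> option bool) e xs v :
  (forall q, O q = O' q) -> evalU O e xs v -> evalU O' e xs v.
Proof. intros H. apply evalU_mono_or. intros q b Hq; rewrite <- H; auto. Qed.

Lemma evalU_ext P r r' e xs v : extends r' r -> evalU (po P r) e xs v -> evalU (po P r') e xs v.
Proof. intros H. apply evalU_mono_or. intros q b; apply po_mono; auto. Qed.

Lemma same_agree f r r' : same r r' -> agree f r' -> agree f r.
Proof. intros (H1&H2&H3) Ha x y Hxy Hy. rewrite H2 by lia. apply Ha; lia. Qed.

Lemma sim_of_evalU P e r x : evalU (po P r) e [x] 1 ->
  exists t0, forall t, t0 <= t -> sim P e t (code_cond r) x = 2.
Proof.
  intro H. apply (evalU_eqor _ (po P (dec (code_cond r)))) in H.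
  - destruct (run_complete P _ e [x] 1 H 1 eq_refl) as [t0 Ht]. exists t0. exact Ht.
  - intro q. symmetry. apply po_same, dec_code.
Qed.

Theorem lemma3p3 (P : nat -> Prop) (ps : nat -> cond)
  (Hvalid : forall s, valid (ps s))
  (Hdesc : forall s, extends (ps (S s)) (ps s))
  (Hlen : forall N, exists s, N <= len (ps s))
  (Hgen : three_generic P ps)
  (f : nat -> nat -> bool)
  (Hf : forall s x y, x < y -> y < len (ps s) -> f x y = sig (ps s) x y) :
  stable f /\
  ~ (exists H : nat -> Prop,
       homogeneous f H /\ computable_from (join (coloring_set f) P) H).
Proof.
  assert (Hchain : forall i j, i <= j -> extends (ps j) (ps i)).
  { intros i j Hij. induction Hij. apply extends_refl. eapply extends_trans; eauto. }
  assert (Hbig : forall N s0, exists t, s0 <= t /\ N <= len (ps t)).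
  { intros N s0. destruct (Hlen N) as [s1 Hs1]. exists (max s0 s1). split. lia.
    destruct (Hchain s1 (max s0 s1) ltac:(lia)) as [Hl _]. lia. }
  assert (Hagree : forall s, agree f (ps s)) by (intros s x y; apply Hf).
  split.
  - intro x. destruct (Hbig (S x) 0) as [s [_ Hs]].
    exists (fst (lab (ps s) x)), (snd (lab (ps s) x)). intros u Hu Hxu.
    destruct (Hbig (S u) s) as [t [Hst Ht]].
    destruct (Hchain s t Hst) as (E1&E2&E3).
    rewrite (Hf t) by lia. rewrite <- (E3 x) by lia. apply (Hvalid t); auto; try lia.
    rewrite E3; lia.
  - intros (H & (Hinf & c & Hhom) & e & He).
    set (B := join (coloring_set f) P) in *.
    assert (HinH : forall r x, agree f r -> evalU (po P r) e [x] 1 -> H x).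
    { intros r x Ha Hu. apply (transfer P f r Ha) in Hu.
      destruct (classic (H x)) as [Hx|Hx]; auto.
      apply He in Hx. pose proof (eval_det _ _ _ _ Hu _ Hx). discriminate. }
    assert (Hsim_sound : forall t n x, sim P e t n x = 2 -> evalU (po P (dec n)) e [x] 1).
    { intros t n x Hs. eapply run_sound; [|exact Hs]. reflexivity. }
    destruct (Hgen (Sset P e) (Sset_sigma P e)) as [[s HS]|[s HS]].
    +
      set (n0 := code_cond (ps s)) in *.
      assert (Hsame := dec_code (ps s)). fold n0 in Hsame.
      assert (Hag0 : agree f (dec n0)) by (eapply same_agree; eauto).
      destruct HS as [a Ha].
      destruct (Nat.eqb_spec (nthe 0 a) 0) as [Etag|Etag].
      * destruct (Ha 0) as [c0 Hc0]. apply Rr_enc in Hc0. unfold Rb in Hc0.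
        rewrite Etag in Hc0. cbn iota zeta beta in Hc0. change (0 =? 0) with true in Hc0. cbn iota in Hc0.
        repeat rewrite andb_true_iff in Hc0. destruct Hc0 as (L1&L2&L3&S1&S2&S3&D).
        apply Nat.ltb_lt in L1, L2, L3. apply Nat.eqb_eq in S1, S2, S3.
        apply Hsim_sound in S1, S2, S3.
        apply (HinH _ _ Hag0) in S1, S2, S3.
        rewrite <- (Hag0 (nthe 1 a)), <- (Hag0 (nthe 2 a)) in D by lia.
        rewrite (Hhom _ _ S1 S2 L1), (Hhom _ _ S2 S3 L2) in D. rewrite eqb_reflx in D. discriminate.
      * set (m := nthe 1 a).
        destruct (Hinf m) as [x [Hmx Hx]].
        pose proof (proj1 (He x) Hx) as Hev.
        destruct (finite_use P f e [x] 1 Hev) as [N HN].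
        destruct (Hbig (max N (S x)) s) as [t [Hst Ht]].
        assert (Hu : evalU (po P (ps t)) e [x] 1) by (apply HN; auto; lia).
        destruct (sim_of_evalU P e _ x Hu) as [t0 Ht0].
        set (nr := code_cond (ps t)) in *.
        destruct (Ha (encode_list [nr; x; t0])) as [c0 Hc0]. apply Rr_enc in Hc0. unfold Rb in Hc0.
        destruct (Nat.eqb_spec (nthe 0 a) 0); [contradiction|]. cbv zeta in Hc0.
        rewrite !nthe_enc in Hc0. simpl nth in Hc0. fold m in Hc0.
        assert (Hsr := dec_code (ps t)). fold nr in Hsr.
        assert (V : validb nr = true) by (apply validb_spec; eapply same_valid; eauto).
        assert (X : extb nr n0 = true).
        { apply extb_spec. eapply same_ext_l; eauto. eapply same_ext_r. apply Hsame. apply Hchain; auto. }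
        rewrite V, X in Hc0. cbn [andb] in Hc0.
        destruct Hsr as [Hl _]. rewrite Hl, Ht0 in Hc0 by lia.
        destruct (Nat.leb_spec m x); [|lia]. destruct (Nat.ltb_spec x (len (ps t))); [|lia].
        discriminate.
    +
      set (p := ps s) in *.
      assert (Hstep : forall q m, valid q -> extends q p -> exists r x, valid r /\ extends r q /\
                m <= x /\ x < len r /\ evalU (po P r) e [x] 1).
      { intros q m Hq Hqp.
        assert (HnS : ~ Sset P e (code_cond q)) by (intro; apply HS; eauto).
        set (nq := code_cond q) in *.
        assert (~ forall b, exists c0, Rr P e (encode_list [nq; encode_list [1; m]; b; c0])).
        { intro; apply HnS; eexists; eauto. }
        apply not_all_ex_not in H0. destruct H0 as [b Hb].
        assert (Hr : Rb P e nq (encode_list [1; m]) b = false).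
        { apply not_true_is_false. intro. apply Hb. exists 0. apply Rr_enc. auto. }
        unfold Rb in Hr. rewrite !nthe_enc in Hr. simpl in Hr.
        apply negb_false_iff in Hr. repeat rewrite andb_true_iff in Hr.
        destruct Hr as (V&X&M&L&Sm).
        apply validb_spec in V. apply extb_spec in X. apply Nat.leb_le in M. apply Nat.ltb_lt in L.
        apply Nat.eqb_eq in Sm. apply Hsim_sound in Sm.
        exists (dec (nthe 0 b)), (nthe 1 b). split; [auto|split; [|split; [auto|split; auto]]].
        eapply same_ext_r; [|exact X]. apply same_sym, dec_code. }
      destruct (Hstep p (len p) (Hvalid s) (extends_refl p)) as (r1 & x1 & V1 & X1 & M1 & L1 & U1).
      set (r1' := relabel r1 (len p) false).
      assert (V1' : valid r1') by (apply relabel_valid; auto).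
      assert (X1' : extends r1' p) by (apply relabel_ext; auto).
      destruct (Hstep r1' (len r1) V1' X1') as (r2 & x2 & V2 & X2 & M2 & L2 & U2).
      set (r2' := relabel r2 (len r1) true).
      assert (V2' : valid r2') by (apply relabel_valid; auto).
      assert (X2' : extends r2' r1') by (apply relabel_ext; auto).
      assert (X2p : extends r2' p) by (eapply extends_trans; eauto).
      destruct (Hstep r2' (len r2) V2' X2p) as (r3 & x3 & V3 & X3 & M3 & L3 & U3).
      assert (X31 : extends r3 r1') by (eapply extends_trans; eauto).
      assert (U1' : evalU (po P r3) e [x1] 1) by (eapply evalU_ext; [exact X31|exact U1]).
      assert (U2' : evalU (po P r3) e [x2] 1) by (eapply evalU_ext; [exact X3|exact U2]).
      pose proof X3 as X3o. destruct X2 as (Xl2 & _ & Xlab2). destruct X3 as (Xl3 & _ & Xlab3).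
      simpl in Xl2, Xl3.
      assert (C1 : sig r3 x1 x2 = false).
      { assert (E : lab r3 x1 = (false, len r1)).
        { rewrite Xlab3 by (simpl; lia). simpl. destruct (Nat.ltb_spec x1 (len r1)); [|lia].
          rewrite Xlab2 by (simpl; lia). simpl. destruct (Nat.ltb_spec x1 (len p)); [lia|]. reflexivity. }
        replace false with (fst (lab r3 x1)) by (rewrite E; reflexivity).
        apply V3; try lia. rewrite E; simpl; lia. }
      assert (C2 : sig r3 x2 x3 = true).
      { assert (E : lab r3 x2 = (true, len r2)).
        { rewrite Xlab3 by (simpl; lia). simpl. destruct (Nat.ltb_spec x2 (len r1)); [lia|]. reflexivity. }
        replace true with (fst (lab r3 x2)) by (rewrite E; reflexivity).
        apply V3; try lia. rewrite E; simpl; lia. }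
      destruct (sim_of_evalU P e _ _ U1') as [t1 T1].
      destruct (sim_of_evalU P e _ _ U2') as [t2 T2].
      destruct (sim_of_evalU P e _ _ U3) as [t3 T3].
      set (T := max t1 (max t2 t3)).
      apply HS. exists r3. split; [exact V3|split].
      { eapply extends_trans; eauto. }
      exists (encode_list [0; x1; x2; x3; T]). intro b. exists 0. apply Rr_enc. unfold Rb.
      rewrite !nthe_enc. cbn [nth]. change (0 =? 0) with true. cbv iota zeta.
      pose proof (dec_code r3) as (Sl & Ss & _).
      rewrite Sl, !Ss by lia. rewrite C1, C2.
      rewrite T1, T2, T3 by lia.
      destruct (Nat.ltb_spec x1 x2); [|lia]. destruct (Nat.ltb_spec x2 x3); [|lia].
      destruct (Nat.ltb_spec x3 (len r3)); [|lia]. reflexivity.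
Qed.
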